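(* Let $\mathcal{G}=(\mathcal{V},\mathcal{E})$ be an unweighted finite simple graph and $f:\mathcal{V}\to\mathbb{R}$ a filtering function. Let $u\in\mathcal{V}$ be dominated by $v\in\mathcal{V}$, and suppose $f(u)\geq f(v)$. Then for every $k\geq 0$, $$PD_k(\mathcal{G},f)=PD_k(\mathcal{G}-\{u\},f),$$ where on the right $f$ is restricted to $\mathcal{V}\setminus\{u\}$ and the same threshold set is used.
   Context: For a vertex $w$, $N(w)=\{w\}\cup\{x: \{w,x\}\in\mathcal{E}\}$ is its closed neighborhood; $u$ is dominated by $v\neq u$ if $N(u)\subset N(v)$. $\mathcal{G}-\{u\}$ is obtained by deleting $u$ and all its incident edges. For $f:\mathcal{V}\to\mathbb{R}$, let $\alpha_0<\dots<\alpha_m$ be thresholds with $\alpha_0=\min f$, $\alpha_m=\max f$; $\mathcal{G}_i$ is the subgraph induced by $\{w: f(w)\le\alpha_i\}$ and $\widehat{\mathcal{G}}_i$ its clique (flag) complex (simplices = sets of pairwise adjacent vertices). $PD_k(\mathcal{G},f)$ is the $k$-th persistence diagram (field coefficients) of the sublevel filtration $\widehat{\mathcal{G}}_0\subset\dots\subset\widehat{\mathcal{G}}_m$; for a subgraph the same construction is applied with the restricted $f$ and the same thresholds. *)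

(* Defs.v *)
From HB Require Import structures.
From mathcomp Require Import all_boot all_order all_algebra.
From mathcomp Require Import reals.
Set Implicit Arguments. Unset Strict Implicit. Unset Printing Implicit Defensive.
Import Order.TTheory GRing.Theory Num.Theory.
Local Open Scope ring_scope.

(* Graphs: vertex type V : finType, adjacency e : rel V (symmetric,
   irreflexive); a (sub)graph is given by its vertex set W : {set V},
   edges being those of e between vertices of W (induced subgraph). *)

Section Graphs.
Variable V : finType.
Variable e : rel V.

Definition simple_graph := symmetric e /\ irreflexive e.

Definition closed_nbhd (w : V) : {set V} := w |: [set x | e w x].

Definition dominated (u v : V) : Prop := v != u /\ closed_nbhd u \subset closed_nbhd v.

Definition sublevel_clique_complex (R : realType) (W : {set V}) (f : V -> R) (a : R)
  : {set {set V}} :=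
  [set s : {set V} | [&& s != set0, s \subset W,
     [forall x in s, f x <= a] &
     [forall x in s, forall y in s, (x != y) ==> e x y]]].
End Graphs.

(* Simplicial chains with coefficients in a field F, realised as row vectors
   indexed by all subsets of V (a k-simplex is a set of size k+1).
   Orientation: the vertices are ordered by enum_rank. *)
Section Chains.
Variables (V : finType) (F : fieldType).

Definition nS := #|{: {set V}}|.
Definition sx (i : 'I_nS) : {set V} := enum_val i.

Definition bsign (x : V) (s : {set V}) : F :=
  (-1) ^+ #|[set y in s | (enum_rank y < enum_rank x)%N]|.

(* boundary matrix (row-vector convention: c |-> c *m bdry) of the
   (non-augmented) simplicial chain complex *)
Definition bdry : 'M[F]_nS :=
  \matrix_(a, b) (if sx b == set0 then 0 else
     \sum_(x in sx a | sx b == sx a :\ x) bsign x (sx a)).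

Definition kchains (K : {set {set V}}) (k : nat) : 'M[F]_nS :=
  diag_mx (\row_a (if (sx a \in K) && (#|sx a| == k.+1) then 1 else 0)).

Definition cycles (K : {set {set V}}) (k : nat) : 'M[F]_nS :=
  (kchains K k :&: kermx bdry)%MS.
Definition boundaries (K : {set {set V}}) (k : nat) : 'M[F]_nS :=
  (kchains K k.+1 *m bdry)%MS.

(* persistent Betti number beta_k^{K,L} = dim Z_k(K) / (B_k(L) \cap Z_k(K))
   = dim of the image of H_k(K) -> H_k(L)  (for K \subset L) *)
Definition pbetti (K L : {set {set V}}) (k : nat) : nat :=
  (\rank (cycles K k) - \rank (cycles K k :&: boundaries L k))%N.
End Chains.

(* PD k i j is the multiplicity of the point (alpha i, alpha j) for 0 <= i < j <= m,
   and PD k i (m+1) the multiplicity of the essential point (alpha i, +oo), i <= m;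
   all other entries are 0 (standard Edelsbrunner--Harer definition). *)
Definition PD (F : fieldType) (V : finType) (e : rel V) (W : {set V})
  (R : realType) (f : V -> R) (alpha : nat -> R) (m k : nat) : nat -> nat -> int :=
  fun i j =>
  let K := fun t => sublevel_clique_complex e W f (alpha t) in
  let b := fun s t => (pbetti F (K s) (K t) k)%:Z in
  if (i < j <= m)%N then
    (b i j.-1 - b i j) - (if i == 0%N then 0 else b i.-1 j.-1 - b i.-1 j)
  else if (i <= m)%N && (j == m.+1) then
    b i m - (if i == 0%N then 0 else b i.-1 m)
  else 0.

(* Main.v *)
Require Import Defs.
From HB Require Import structures.
From mathcomp Require Import all_boot all_order all_algebra.
From mathcomp Require Import ring zify.
From mathcomp Require Import reals.
From Stdlib Require Import FunctionalExtensionality.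
Set Implicit Arguments. Unset Strict Implicit. Unset Printing Implicit Defensive.
Import Order.TTheory GRing.Theory Num.Theory.
Local Open Scope ring_scope.

Lemma abstract_rank (F : fieldType) (n : nat) (D H CK CK' CL CL' : 'M[F]_n) :
  D *m D = 0 ->
  (CK' <= CK)%MS -> (CL' <= CL)%MS ->
  (CK *m (1%:M - (H *m D + D *m H)) <= CK')%MS ->
  (CL *m (1%:M - (H *m D + D *m H)) <= CL')%MS ->
  (CK *m H <= CL)%MS ->
  CK' *m (H *m D + D *m H) = 0 ->
  (\rank (CK :&: kermx D) - \rank ((CK :&: kermx D) :&: CL *m D) =
   \rank (CK' :&: kermx D) - \rank ((CK' :&: kermx D) :&: CL' *m D))%N.
Proof.
move=> hDD sK sL hKP hLP hKH hKQ.
set Q := H *m D + D *m H; set P := 1%:M - Q.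
have PD : P *m D = D *m P.
  rewrite /P /Q mulmxBl mulmxBr mul1mx mulmx1 mulmxDl mulmxDr.
  by rewrite -!mulmxA hDD mulmx0 !mulmxA hDD mul0mx add0r addr0.
have PQ : P + Q = 1%:M by rewrite /P subrK.
have fixP : forall m (X : 'M_(m, n)), (X <= CK')%MS -> X *m P = X.
  move=> m X /submxP[Y ->]; rewrite /P mulmxBr mulmx1 -mulmxA hKQ mulmx0 subr0 //.
set Z := (CK :&: kermx D)%MS; set Z' := (CK' :&: kermx D)%MS.
set B := (CL *m D)%MS; set B' := (CL' *m D)%MS.
have ZD : Z *m D = 0 by apply/sub_kermxP; exact: capmxSr.
have sZ' : (Z' <= Z)%MS by apply: capmxS.
have ZP : (Z *m P == Z')%MS.
  apply/andP; split.
    rewrite sub_capmx; apply/andP; split.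
      apply: submx_trans hKP; apply: submxMr; exact: capmxSl.
    by apply/sub_kermxP; rewrite -mulmxA PD mulmxA ZD mul0mx.
  rewrite -{1}(fixP _ Z') ?submxMr //; exact: capmxSl.
have sB' : (B' <= B)%MS by apply: submxMr.
have WP : ((Z :&: B) *m P == Z' :&: B')%MS.
  apply/andP; split.
    rewrite sub_capmx; apply/andP; split.
      apply: submx_trans (proj1 (andP ZP)); apply: submxMr; exact: capmxSl.
    apply: (@submx_trans _ _ _ _ _ _ (CL *m P *m D)).
      rewrite -[CL *m P *m D]mulmxA PD mulmxA; apply: submxMr; exact: capmxSr.
    exact: submxMr.
  rewrite -{1}(fixP _ (Z' :&: B')%MS).
    by apply: submxMr; apply: capmxS.
  apply: submx_trans (capmxSl _ _) _; exact: capmxSl.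
have KK : ((Z :&: kermx P) == (Z :&: B) :&: kermx P)%MS.
  apply/andP; split; last by apply: capmxS => //; exact: capmxSl.
  rewrite sub_capmx capmxSr andbT sub_capmx capmxSl /=.
  set X := (Z :&: kermx P)%MS.
  have XP : X *m P = 0 by apply/sub_kermxP; exact: capmxSr.
  have XD : X *m D = 0 by apply/sub_kermxP; apply: submx_trans (capmxSl _ _) _; exact: capmxSr.
  have -> : X = X *m H *m D.
    have := congr1 (mulmx X) PQ; rewrite mulmx1 mulmxDr XP add0r /Q mulmxDr.
    by rewrite [X *m (D *m H)]mulmxA XD mul0mx addr0 mulmxA; move=> ->.
  apply: submxMr; apply: submx_trans hKH; apply: submxMr.
  apply: submx_trans (capmxSl _ _) _; exact: capmxSl.
have r1 := mxrank_mul_ker Z P.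
have r2 := mxrank_mul_ker (Z :&: B)%MS P.
rewrite (eqmx_rank ZP) (eqmx_rank KK) in r1; rewrite (eqmx_rank WP) in r2.
by rewrite -r1 -r2 subnDr.
Qed.

Section Gen.
Variables (V : finType) (F : fieldType).

Lemma sumS (g : {set V} -> F) : \sum_(j < nS V) g (sx j) = \sum_(r : {set V}) g r.
Proof.
rewrite (reindex (@enum_rank _)) /=; last first.
  by exists enum_val => x _; [exact: enum_rankK | exact: enum_valK].
by apply: eq_bigr => r _; rewrite /sx enum_rankK.
Qed.

Definition bdf (s t : {set V}) : F :=
  if t == set0 then 0 else \sum_(x in s | t == s :\ x) bsign F x s.

Lemma bdryE a b : bdry V F a b = bdf (sx a) (sx b).
Proof. by rewrite mxE. Qed.

Lemma bdf_face (s : {set V}) (x : V) : x \in s -> s :\ x != set0 -> bdf s (s :\ x) = bsign F x s.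
Proof.
move=> xs sx0; rewrite /bdf (negbTE sx0) (big_pred1 x) // => y /=.
apply/andP/eqP => [[ys /eqP E]|->]; last by rewrite xs.
apply/eqP; apply: contraT => yx.
have : y \in s :\ x by rewrite !inE yx.
by rewrite E !inE eqxx.
Qed.

Lemma bdf_nz (s t : {set V}) : bdf s t != 0 -> t != set0 /\ exists2 x, x \in s & t = s :\ x.
Proof.
rewrite /bdf; case: ifP => [_|/negbT t0 H]; first by rewrite eqxx. split => //.
case: (pickP [pred x | (x \in s) && (t == s :\ x)]) => [x /andP[xs /eqP E]|P0].
  by exists x.
by move: H; rewrite big_pred0 ?eqxx.
Qed.

Definition cnt (s : {set V}) (x : V) := #|[set y in s | (enum_rank y < enum_rank x)%N]|.

Lemma cntD1 (s : {set V}) (x y : V) : x \in s -> cnt s y = (cnt (s :\ x) y + (enum_rank x < enum_rank y))%N.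
Proof.
move=> xs; rewrite /cnt (cardsD1 x [set z in s | _]) inE xs /= addnC; congr (_ + _)%N.
by apply: eq_card => z; rewrite !inE andbA.
Qed.

Lemma cntU1 (s : {set V}) (x y : V) : x \notin s -> cnt (x |: s) y = (cnt s y + (enum_rank x < enum_rank y))%N.
Proof. by move=> xs; rewrite (cntD1 _ (setU11 x s)) setU1K. Qed.

Lemma bsignE (x : V) (s : {set V}) : bsign F x s = (-1) ^+ cnt s x.
Proof. by []. Qed.

Lemma rk_cases (x y : V) : x != y ->
  ((enum_rank x < enum_rank y)%N && ~~ (enum_rank y < enum_rank x)%N) ||
  ((enum_rank y < enum_rank x)%N && ~~ (enum_rank x < enum_rank y)%N).
Proof.
move=> xy; case: (ltngtP (enum_rank x) (enum_rank y)) => //= E.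
by move: xy; rewrite (enum_rank_inj (val_inj E)) eqxx.
Qed.

Definition sw (p : V * V) := (p.2, p.1).
Lemma swK : involutive sw. Proof. by case. Qed.

Lemma pair_cancel (G : V -> V -> F) : (forall x, G x x = 0) ->
  (forall x y, G x y + G y x = 0) -> \sum_x \sum_y G x y = 0.
Proof.
move=> G0 GA; rewrite pair_bigA /=.
rewrite (bigID (fun p : V * V => (enum_rank p.1 < enum_rank p.2)%N)) /=.
have -> : \sum_(p | ~~ (enum_rank p.1 < enum_rank p.2)%N) G p.1 p.2 =
          \sum_(p | (enum_rank p.2 < enum_rank p.1)%N) G p.1 p.2.
  rewrite big_mkcond [RHS]big_mkcond; apply: eq_bigr => -[x y] _ /=.
  case: (ltngtP (enum_rank x) (enum_rank y)) => // E.
  by rewrite (enum_rank_inj (val_inj E)) G0.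
rewrite (reindex_inj (inv_inj swK)) /= -big_split /=.
by apply: big1 => -[x y] _; rewrite GA.
Qed.

Lemma bdd_sum (s t : {set V}) : \sum_r bdf s r * bdf r t = 0.
Proof.
case t0: (t == set0).
  by apply: big1 => r _; rewrite [bdf r t]/bdf t0 mulr0.
have E1 : forall r, bdf s r * bdf r t =
    \sum_x (if (x \in s) && (r == s :\ x) then bsign F x s * bdf r t else 0).
  move=> r; rewrite -big_mkcond -big_distrl /= /bdf; case: eqP => // ->.
  have z : \sum_(x in set0 | t == set0 :\ x) bsign F x (set0 : {set V}) = 0 by rewrite big_pred0 // => x; rewrite in_set0.
  by rewrite t0 z !mulr0.
rewrite (eq_bigr _ (fun r _ => E1 r)) exchange_big /=.
under eq_bigr => x _ do rewrite -big_mkcond /=.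
have E2 : forall x, \sum_(r | (x \in s) && (r == s :\ x)) bsign F x s * bdf r t =
   \sum_y (if [&& x \in s, y \in s :\ x & t == s :\ x :\ y]
           then bsign F x s * bsign F y (s :\ x) else 0).
  move=> x; case xs: (x \in s) => /=; last first.
    by rewrite big_pred0 // big1.
  rewrite (big_pred1 (s :\ x)) // /bdf t0 big_distrr big_mkcond /=.
  by apply: eq_bigr => y _; case: ifP.
rewrite (eq_bigr _ (fun x _ => E2 x)); apply: pair_cancel.
  by move=> x; rewrite !inE eqxx /= andbF.
move=> x y; case xy: (x == y).
  by rewrite (eqP xy) !inE eqxx /= andbF addr0.
have -> : s :\ y :\ x = s :\ x :\ y by rewrite !setDDl setUC.
rewrite !inE (eq_sym y x) xy /=.
case xs: (x \in s); case ys: (y \in s) => //=; rewrite ?addr0 //.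
case: (t == _) => //=; last by rewrite addr0.
rewrite !bsignE (cntD1 x ys) (cntD1 y xs) !exprD.
by case/orP: (rk_cases (negbT xy)) => /andP[-> /negbTE ->] /=; ring.
Qed.

Lemma bdd : bdry V F *m bdry V F = 0.
Proof.
apply/matrixP => a b; rewrite !mxE.
under eq_bigr => j _ do rewrite !bdryE.
by rewrite (sumS (fun r => bdf (sx a) r * bdf r (sx b))) bdd_sum.
Qed.

Lemma sgn2 (x : V) (s : {set V}) : bsign F x s * bsign F x s = 1.
Proof. by rewrite -expr2 sqrr_sign. Qed.

Lemma sub_diag (A : 'M[F]_(nS V)) (P : pred {set V}) :
  (forall i j, A i j != 0 -> P (sx j)) ->
  (A <= diag_mx (\row_a (if P (sx a) then 1 else 0)))%MS.
Proof.
move=> HA; have -> : A = A *m diag_mx (\row_a (if P (sx a) then 1 else 0)).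
  apply/matrixP => i j; rewrite mul_mx_diag !mxE.
  case: ifP; rewrite ?mulr1 ?mulr0 // => Pj.
  by apply/eqP; apply: contraFT Pj => /HA.
exact: submxMl.
Qed.

Lemma diag_entry (P : pred {set V}) i j :
  diag_mx (\row_a (if P (sx a) then 1 else 0)) i j != 0 :> F -> P (sx j).
Proof. by rewrite !mxE; case: (i =P j) => [->|_]; case: ifP; rewrite ?mulr0n ?mulr1n ?mul0rn ?eqxx. Qed.

Lemma diagM_entry (P : pred {set V}) (M : 'M[F]_(nS V)) i j :
  (diag_mx (\row_a (if P (sx a) then 1 else 0)) *m M) i j != 0 -> P (sx i) /\ M i j != 0.
Proof. by rewrite mul_diag_mx !mxE; case: ifP; rewrite ?mul0r ?eqxx // mul1r. Qed.

Lemma kch_sub (K : {set {set V}}) k (A : 'M[F]_(nS V)) :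
  (forall i j, A i j != 0 -> (sx j \in K) && (#|sx j| == k.+1)) -> (A <= kchains F K k)%MS.
Proof. exact: (sub_diag (P := fun s => (s \in K) && (#|s| == k.+1))). Qed.

Lemma kch_entry (K : {set {set V}}) k i j :
  kchains F K k i j != 0 -> (sx j \in K) && (#|sx j| == k.+1).
Proof. exact: (diag_entry (P := fun s => (s \in K) && (#|s| == k.+1))). Qed.

Lemma kchM_entry (K : {set {set V}}) k (M : 'M[F]_(nS V)) i j :
  (kchains F K k *m M) i j != 0 -> ((sx i \in K) && (#|sx i| == k.+1)) /\ M i j != 0.
Proof. exact: (diagM_entry (P := fun s => (s \in K) && (#|s| == k.+1))). Qed.

Variables (u v : V).
Hypothesis huv : u != v.

Definition cS (s : {set V}) : F := bsign F v (v |: s).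
Definition hf (s t : {set V}) : F :=
  if [&& u \in s, v \notin s & t == v |: s] then cS s else 0.
Definition hmat : 'M[F]_(nS V) := \matrix_(a, b) hf (sx a) (sx b).
Definition qf (s t : {set V}) : F :=
  (if (u \in s) && (v \notin s) then cS s * bdf (v |: s) t else 0) +
  (if (u \in t) && (v \in t) then bdf s (t :\ v) * cS (t :\ v) else 0).

Lemma hd_sum (s t : {set V}) : \sum_r hf s r * bdf r t =
  if (u \in s) && (v \notin s) then cS s * bdf (v |: s) t else 0.
Proof.
rewrite /hf; case: ifP => C.
  case/andP: C => us vs.
  rewrite (bigD1 (v |: s)) //= us vs eqxx big1 ?addr0 // => r /negbTE rv.
  by rewrite rv andbF mul0r.
by apply: big1 => r _; rewrite andbA C mul0r.
Qed.

Lemma dh_sum (s t : {set V}) : \sum_r bdf s r * hf r t =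
  if (u \in t) && (v \in t) then bdf s (t :\ v) * cS (t :\ v) else 0.
Proof.
rewrite (bigD1 (t :\ v)) //= big1 ?addr0; last first.
  move=> r rt; rewrite /hf; case: ifP => [/and3P[_ vr /eqP E]|_]; last by rewrite mulr0.
  by move: rt; rewrite E setU1K // eqxx.
rewrite /hf in_setD1 huv setD11 /=; case vt: (v \in t).
  by rewrite setD1K // eqxx andbT; case: (u \in t); rewrite //= mulr0.
have -> : (t == v |: t :\ v) = false.
  by apply/negbTE/eqP => E; move: vt; rewrite E setU11.
by rewrite !andbF mulr0.
Qed.

Lemma qE (a b : 'I_(nS V)) : (hmat *m bdry V F + bdry V F *m hmat) a b = qf (sx a) (sx b).
Proof.
rewrite !mxE.
under eq_bigr do rewrite !mxE.
under [X in _ + X]eq_bigr do rewrite !mxE.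
rewrite (sumS (fun r => hf (sx a) r * bdf r (sx b))).
rewrite (sumS (fun r => bdf (sx a) r * hf r (sx b))).
by rewrite hd_sum dh_sum.
Qed.

Lemma PE (a b : 'I_(nS V)) : (1%:M - (hmat *m bdry V F + bdry V F *m hmat)) a b =
   (sx a == sx b)%:R - qf (sx a) (sx b).
Proof.
rewrite -qE; set M := (hmat *m _ + _).
have -> : (1%:M - M) a b = (a == b)%:R - M a b by rewrite !mxE.
by rewrite (inj_eq (@enum_val_inj _ _)).
Qed.

End Gen.

Section Graph.
Variables (V : finType) (e : rel V) (R : realType) (f : V -> R) (u v : V).
Hypothesis esym : symmetric e.
Hypothesis Hdom : dominated e u v.
Hypothesis Hf : f v <= f u.

Let Kc a := sublevel_clique_complex e [set: V] f a.
Let Kp a := sublevel_clique_complex e ([set: V] :\ u) f a.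

Lemma inKP (W : {set V}) a (s : {set V}) :
  reflect [/\ s != set0, s \subset W, (forall x, x \in s -> f x <= a) &
     (forall x y, x \in s -> y \in s -> x != y -> e x y)]
  (s \in sublevel_clique_complex e W f a).
Proof.
rewrite inE; apply: (iffP and4P) => [[H0 H1 /forall_inP H2 /forall_inP H3]|[H0 H1 H2 H3]].
  split => // x y xs ys xy.
  by move: (H3 x xs) => /forall_inP/(_ y ys)/implyP; apply.
split => //; first by apply/forall_inP.
apply/forall_inP => x xs; apply/forall_inP => y ys; apply/implyP; exact: H3.
Qed.

Lemma KpE a (s : {set V}) : (s \in Kp a) = (s \in Kc a) && (u \notin s).
Proof.
rewrite !inE subsetD1 subsetT /=.
by case: (u \in s); rewrite /= ?andbF ?andbT.
Qed.

Lemma vu : v != u. Proof. by case: Hdom. Qed.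

Lemma nbv a (s : {set V}) y : s \in Kc a -> u \in s -> y \in s -> y != v -> e v y.
Proof.
case/inKP => _ _ _ Hc us ys yv.
case: Hdom => _ /subsetP sub.
have : y \in closed_nbhd e u.
  rewrite /closed_nbhd !inE; case: (eqVneq y u) => //= yu.
  by apply: Hc => //; rewrite eq_sym.
by move/sub; rewrite /closed_nbhd !inE (negbTE yv).
Qed.

Lemma extK a (s : {set V}) : s \in Kc a -> u \in s -> v \notin s -> v |: s \in Kc a.
Proof.
move=> sK us vs; have sK' := sK; case/inKP: sK' => _ _ Hfs Hc.
apply/inKP; split.
- by apply/set0Pn; exists v; rewrite setU11.
- exact: subsetT.
- move=> x /setU1P[->|xs]; last exact: Hfs.
  exact: le_trans Hf (Hfs _ us).
- move=> x y /setU1P[->|xs] /setU1P[->|ys] xy.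
  + by rewrite eqxx in xy.
  + by apply: (nbv sK us ys); rewrite eq_sym.
  + by rewrite esym; apply: (nbv sK us xs).
  + exact: Hc.
Qed.

Lemma subK a (s t : {set V}) : s \in Kc a -> t \subset s -> t != set0 -> t \in Kc a.
Proof.
case/inKP => _ _ Hfs Hc /subsetP ts t0; apply/inKP; split => //.
- by move=> x xt; apply: Hfs; apply: ts.
- by move=> x y xt yt; apply: Hc; apply: ts.
Qed.

Lemma monoK (W : {set V}) a b (s : {set V}) : a <= b -> s \in sublevel_clique_complex e W f a ->
  s \in sublevel_clique_complex e W f b.
Proof.
move=> ab /inKP[H0 H1 H2 H3]; apply/inKP; split => //.
by move=> x /H2 /le_trans; apply.
Qed.

Lemma swapK a (s : {set V}) : s \in Kc a -> u \in s -> v \notin s -> (v |: s) :\ u \in Kp a.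
Proof.
move=> sK us vs; rewrite KpE setD11 andbT.
apply: (subK (extK sK us vs)); first exact: subD1set.
by apply/set0Pn; exists v; rewrite !inE vu eqxx.
Qed.

Variable F : fieldType.

Lemma huv : u != v. Proof. by rewrite eq_sym vu. Qed.

Lemma E3 (s t : {set V}) : u \notin s -> @qf V F u v s t = 0.
Proof.
move=> us; rewrite /qf (negbTE us) /= add0r.
case: ifP => [/andP[ut vt]|] //.
case: (eqVneq (bdf F s (t :\ v)) 0) => [->|/bdf_nz[_ [x xs E]]]; first by rewrite mul0r.
have : u \in t :\ v by rewrite in_setD1 huv ut.
by rewrite E in_setD1 => /andP[_ us']; rewrite us' in us.
Qed.

Lemma E2 a k (s t : {set V}) : (s \in Kc a) && (#|s| == k.+1) -> @hf V F u v s t != 0 ->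
  (t \in Kc a) && (#|t| == k.+2).
Proof.
case/andP => sK sk; rewrite /hf; case: ifP => [/and3P[us vs /eqP ->] _|]; last by rewrite eqxx.
by rewrite (extK sK us vs) cardsU1 (negbTE vs) (eqP sk) /= add1n.
Qed.

Lemma E1 a k (s t : {set V}) : (s \in Kc a) && (#|s| == k.+1) ->
  (s == t)%:R - @qf V F u v s t != 0 -> (t \in Kp a) && (#|t| == k.+1).
Proof.
case/andP=> sK sk Hne.
have huv := huv.
case us: (u \in s); last first.
  move: Hne; rewrite E3 ?us // subr0; case: (s =P t) => [<- _|]; last by rewrite /= mulr0n eqxx.
  by rewrite KpE sK us sk.
case vs: (v \in s).
  exfalso; move: Hne; apply/negP; rewrite negbK subr_eq0 /qf vs andbF add0r.
  case: (s =P t) => [<-|st].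
    rewrite us vs /= bdf_face //; last by apply/set0Pn; exists u; rewrite in_setD1 huv us.
    by rewrite /cS setD1K // sgn2.
  case: ifP => [/andP[ut vt]|]; last by rewrite /= mulr0n.
  case: (eqVneq (bdf F s (t :\ v)) 0) => [->|/bdf_nz[_ [x xs E]]]; first by rewrite mul0r /= mulr0n.
  exfalso; case: (eqVneq x v) => [xv|xv].
    by apply: st; rewrite -(setD1K vt) -(setD1K vs) E xv.
  have : v \in s :\ x by rewrite in_setD1 eq_sym xv vs.
  by rewrite -E setD11.
case: (eqVneq t ((v |: s) :\ u)) => [->|tne].
  rewrite swapK ?vs //=.
  have h1 := cardsD1 u (v |: s); rewrite !inE us orbT cardsU1 vs (eqP sk) /= in h1.
  apply/eqP; lia.
exfalso; move: Hne; apply/negP; rewrite negbK subr_eq0.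
have ne : (v |: s) :\ v != set0 by rewrite setU1K ?vs //; apply/set0Pn; exists u.
case: (s =P t) => [<-|st].
  rewrite /qf us vs /=.
  have fc := @bdf_face V F _ _ (setU11 v s) ne; rewrite setU1K ?vs // in fc.
  by rewrite fc /cS sgn2 addr0.
rewrite /= mulr0n eq_sym; apply/eqP.
case ex: [exists x in s, (x != u) && (t == (v |: s) :\ x)].
  case/exists_inP: ex => x xs /andP[xu /eqP Et].
  have xv : x != v by apply/eqP => E; move: vs; rewrite -E xs.
  have vsx : v \notin s :\ x by rewrite in_setD1 vs andbF.
  have ut : u \in t by rewrite Et in_setD1 eq_sym xu in_setU1 us orbT.
  have vt : v \in t by rewrite Et in_setD1 eq_sym xv setU11.
  have tv : t :\ v = s :\ x.
    apply/setP => z; rewrite Et !inE; case: (eqVneq z v) => [->|zv] /=; last by [].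
    by rewrite vs !andbF.
  rewrite /qf us vs ut vt /= tv bdf_face //; last first.
    by apply/set0Pn; exists u; rewrite in_setD1 eq_sym xu us.
  rewrite Et bdf_face; last 2 first.
  - by rewrite in_setU1 xs orbT.
  - by apply/set0Pn; exists v; rewrite in_setD1 eq_sym xv setU11.
  rewrite /cS !bsignE (cntU1 v vsx) !(cntU1 _ (negbT vs)) (cntD1 v xs) ltnn !addn0 !exprD.
  by case/orP: (rk_cases xv) => /andP[-> /negbTE ->] /=; ring.
rewrite /qf us vs /=.
have -> : bdf F (v |: s) t = 0.
  apply/eqP; apply: contraFT ex => /bdf_nz[_ [y ys Et]].
  case/setU1P: ys => [yv|ys].
    by exfalso; apply: st; rewrite Et yv setU1K ?vs.
  apply/exists_inP; exists y => //; rewrite Et eqxx andbT.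
  by apply/eqP => yu; move: tne; rewrite Et yu eqxx.
rewrite mulr0 add0r; case: ifP => [/andP[ut vt]|] //.
case: (eqVneq (bdf F s (t :\ v)) 0) => [->|/bdf_nz[_ [y ys Ev]]]; first by rewrite mul0r.
exfalso; move/negbT: ex; apply/negP; rewrite negbK.
have uy : u != y.
  have : u \in t :\ v by rewrite in_setD1 huv ut.
  by rewrite Ev in_setD1 => /andP[].
have vy : v != y by apply/eqP => E; move: vs; rewrite E ys.
apply/exists_inP; exists y => //; rewrite eq_sym uy /=; apply/eqP/setP => z.
rewrite !inE; case: (eqVneq z v) => [->|zv] /=; first by rewrite vt vy.
have := congr1 (fun A : {set V} => z \in A) Ev; rewrite /= !inE zv /= => ->.
by [].
Qed.

Lemma pb_eq k a b : a <= b -> pbetti F (Kc a) (Kc b) k = pbetti F (Kp a) (Kp b) k.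
Proof.
move=> ab; rewrite /pbetti /cycles /boundaries.
have huv := huv.
apply: (@abstract_rank F (nS V) (bdry V F) (@hmat V F u v)).
- exact: bdd.
- apply: kch_sub => i j /kch_entry; rewrite KpE -andbA => /and3P[? _ ?].
  by apply/andP.
- apply: kch_sub => i j /kch_entry; rewrite KpE -andbA => /and3P[? _ ?].
  by apply/andP.
- apply: kch_sub => i j /kchM_entry[Si]; rewrite PE //; exact: E1.
- apply: kch_sub => i j /kchM_entry[Si]; rewrite PE //; exact: E1.
- apply: kch_sub => i j /kchM_entry[Si]; rewrite mxE => /(E2 Si)/andP[tK tk].
  by rewrite (monoK ab tK) tk.
- apply/matrixP => i j; rewrite mul_diag_mx mxE qE // !mxE.
  case: ifP => [/andP[iK _]|]; last by rewrite mul0r.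
  by rewrite E3 ?mulr0 //; move: iK; rewrite KpE => /andP[].
Qed.

End Graph.

Theorem theorem2 (V : finType) (e : rel V) (R : realType) (f : V -> R)
  (m : nat) (alpha : nat -> R)
  (He : simple_graph e)
  (Halpha : forall i j : nat, (i < j <= m)%N -> alpha i < alpha j)
  (Hmin : (exists w, f w = alpha 0%N) /\ (forall w, alpha 0%N <= f w))
  (Hmax : (exists w, f w = alpha m) /\ (forall w, f w <= alpha m))
  (u v : V) (Hdom : dominated e u v) (Hf : f v <= f u) :
  forall (F : fieldType) (k : nat),
    PD F e [set: V] f alpha m k = PD F e ([set: V] :\ u) f alpha m k.
Proof.
move=> F k.
have Hb : forall i j, (i <= j <= m)%N ->
  pbetti F (sublevel_clique_complex e [set: V] f (alpha i))
           (sublevel_clique_complex e [set: V] f (alpha j)) k =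
  pbetti F (sublevel_clique_complex e ([set: V] :\ u) f (alpha i))
           (sublevel_clique_complex e ([set: V] :\ u) f (alpha j)) k.
  move=> i j /andP[ij jm]; apply: (pb_eq He.1 Hdom Hf).
  case: (ltngtP i j) ij => // [lij _|-> _]; last exact: lexx.
  by apply: ltW; apply: Halpha; rewrite lij jm.
apply: functional_extensionality => i; apply: functional_extensionality => j.
rewrite /PD /=.
case: ifP => [/andP[ij jm]|_].
  rewrite (Hb i j.-1); last by apply/andP; split; lia.
  rewrite (Hb i j); last by apply/andP; split; lia.
  case: (i =P 0%N) => // i0.
  rewrite (Hb i.-1 j.-1); last by apply/andP; split; lia.
  by rewrite (Hb i.-1 j); last by apply/andP; split; lia.
case: ifP => [/andP[im _]|_] //.
rewrite (Hb i m); last by apply/andP; split; lia.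
case: (i =P 0%N) => // i0.
by rewrite (Hb i.-1 m); last by apply/andP; split; lia.
Qed.
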